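(* Let $3\le a<b$ be integers and for $z\in(0,1)$, $z\ne z_r$, let $h(z)=\dfrac{a z^{a-b}-b-f(z)\big(a(a-1)z^{a-b}-b(b-1)\big)}{b\big((b-1)f(z)-1\big)}$. Then: (i) $h$ has a pole at $z=z_r$ (its denominator vanishes in $(0,1)$ exactly at $z_r$); (ii) $\lim_{z\to0}h(z)=-\infty$; (iii) $\lim_{z\to z_r}h(z)=+\infty$; (iv) $h(z)\in(-\infty,1]$ for all $z\in(0,z_l]$; (v) $h(z)\in(1,+\infty)$ for all $z\in(z_l,z_r)$, and $h(z_l)=1$; (vi) $h(z)\in(-\infty,1)$ for all $z\in(z_r,1)$; (vii) for $z\in(0,1)\setminus\{z_r\}$: $\frac{\partial h}{\partial z}(z)>0 \iff g(z)>0$; (viii) $h$ is strictly increasing on $(0,z_l]$; (ix) $h$ is strictly increasing on $(z_r,1)$; (x) if $\min_z g(z)\ge0$, then $h$ is strictly increasing on $[z_l,z_r)$; (xi) if $\min_z g(z)<0$, then on $[z_l,z_r)$ the function $h$ is strictly increasing up to a local maximum at $z_1$, then strictly decreasing to a local minimum at $z_2$, then strictly increasing afterwards.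
   Context: $f(z)=\frac{-\ln(1-z)(1-z)}{z}$ and $g(z)=f(z)(b-1)(a-1)+\frac1{1-z}+2-b-a$ for $z\in(0,1)$. $z_l$ (resp. $z_r$) is the unique $z\in(0,1)$ with $f(z)=\frac1{a-1}$ (resp. $\frac1{b-1}$). When $g$ has zeros in $(0,1)$, $z_1$ and $z_2$ are the smallest and largest of them. *)

(* Defs.v *)
From Stdlib Require Import Reals Lra Lia ZArith.
Open Scope R_scope.

Definition fz (z : R) : R := - ln (1 - z) * (1 - z) / z.

Definition g (a b : nat) (z : R) : R :=
  fz z * (INR b - 1) * (INR a - 1) + 1 / (1 - z) + 2 - INR b - INR a.

Definition zab (a b : nat) (z : R) : R := powerRZ z (Z.of_nat a - Z.of_nat b).

Definition hnum (a b : nat) (z : R) : R :=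
  INR a * zab a b z - INR b
  - fz z * (INR a * (INR a - 1) * zab a b z - INR b * (INR b - 1)).

Definition hden (a b : nat) (z : R) : R := INR b * ((INR b - 1) * fz z - 1).

Definition h (a b : nat) (z : R) : R := hnum a b z / hden a b z.

(* Main.v *)
Require Import Defs.
From Stdlib Require Import Reals Lra Lia ZArith Classical.
From Coquelicot Require Import Coquelicot.
Open Scope R_scope.

Lemma ln_lt_neg z : 0 < z < 1 -> ln (1 - z) < - z.
Proof.
  intros Hz. rewrite <- (ln_exp (- z)). apply ln_increasing; [lra|].
  pose proof (exp_ineq1 (- z)). assert (- z <> 0) by lra. specialize (H H0). lra.
Qed.

Lemma ln_gt z : 0 < z < 1 -> - ln (1 - z) < z / (1 - z).
Proof.
  intros Hz. assert (E : - ln (1 - z) = ln (/ (1 - z))) by (rewrite ln_Rinv; lra).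
  rewrite E. rewrite <- (ln_exp (z / (1 - z))). apply ln_increasing.
  apply Rinv_0_lt_compat; lra.
  assert (Hy : z / (1 - z) <> 0). { apply Rmult_integral_contrapositive; split; [lra|]. apply Rinv_neq_0_compat; lra. }
  pose proof (exp_ineq1 _ Hy).
  replace (/ (1 - z)) with (1 + z / (1 - z)) by (field; lra). exact H.
Qed.

Lemma f_bounds z : 0 < z < 1 -> 1 - z < fz z < 1.
Proof.
  intros Hz. pose proof (ln_lt_neg z Hz). pose proof (ln_gt z Hz).
  set (L := ln (1 - z)) in *.
  assert (E : fz z = (- L) * (1 - z) / z) by (unfold fz, L; field; lra).
  rewrite E. split.
  - apply Rmult_lt_reg_r with z; [lra|]. replace (- L * (1 - z) / z * z) with (- L * (1 - z)) by (field; lra). nra.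
  - apply Rmult_lt_reg_r with z; [lra|]. replace (- L * (1 - z) / z * z) with (- L * (1 - z)) by (field; lra).
    assert (- L * (1 - z) < z / (1 - z) * (1 - z)) by (apply Rmult_lt_compat_r; lra).
    replace (z / (1 - z) * (1 - z)) with z in H1 by (field; lra). lra.
Qed.

Lemma f_der z : 0 < z < 1 -> derivable_pt_lim fz z ((1 - fz z / (1 - z)) / z).
Proof.
  intros Hz. apply is_derive_Reals. unfold fz. auto_derive.
  - repeat split; lra.
  - replace (1 + - z) with (1 - z) by ring. field. lra.
Qed.

Lemma f_dec x y : 0 < x -> x < y -> y < 1 -> fz y < fz x.
Proof.
  intros. destruct (MVT_cor2 fz (fun c => (1 - fz c / (1 - c)) / c) x y H0) as [c [Hc1 Hc2]].
  - intros c Hc. apply f_der. lra.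
  - assert (Hb := f_bounds c ltac:(lra)).
    assert (fz c / (1 - c) > 1). { apply Rmult_gt_reg_r with (1 - c); [lra|]. replace (fz c / (1 - c) * (1 - c)) with (fz c) by (field; lra). lra. }
    assert ((1 - fz c / (1 - c)) / c < 0). { apply Rmult_lt_reg_r with c; [lra|]. replace ((1 - fz c / (1 - c)) / c * c) with (1 - fz c / (1 - c)) by (field; lra). lra. }
    nra.
Qed.

Lemma f_cont z : 0 < z < 1 -> continuity_pt fz z.
Proof. intros Hz. apply derivable_continuous_pt. exists ((1 - fz z / (1 - z)) / z). apply f_der; auto. Qed.

Definition Kf (c s z : R) := - c * ln (1 - z) + z / (1 - z)^2 - s * z / (1 - z).
Definition Qf (c s z : R) := c * (1 - z)^2 - s * (1 - z) + 1 + z.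

Lemma K_der c s z : z < 1 -> derivable_pt_lim (Kf c s) z (Qf c s z / (1 - z)^3).
Proof.
  intros Hz. apply is_derive_Reals. unfold Kf, Qf. auto_derive.
  - repeat split; try lra. apply Rmult_integral_contrapositive; split; lra.
  - replace (1 + - z) with (1 - z) by ring. field. lra.
Qed.

Lemma K0 c s : Kf c s 0 = 0.
Proof. unfold Kf. rewrite Rminus_0_r, ln_1. field. Qed.

Lemma K_g a b z : 0 < z < 1 ->
  Kf ((INR a - 1) * (INR b - 1)) (INR a + INR b - 2) z = g a b z * (z / (1 - z)).
Proof. intros Hz. unfold Kf, g, fz. field. lra. Qed.

Lemma Q_no3 c s r1 r2 r3 : 0 < c -> Qf c s r1 = 0 -> Qf c s r2 = 0 -> Qf c s r3 = 0 ->
  r1 < r2 -> r2 < r3 -> False.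
Proof.
  unfold Qf; intros Hc H1 H2 H3 H12 H23.
  assert (E1 : (r2 - r1) * (c * (2 - r1 - r2) - s - 1) = 0) by nra.
  assert (E2 : (r3 - r1) * (c * (2 - r1 - r3) - s - 1) = 0) by nra.
  apply Rmult_integral in E1. apply Rmult_integral in E2.
  destruct E1 as [E1|E1]; [lra|]. destruct E2 as [E2|E2]; [lra|]. nra.
Qed.

Lemma K_root c s x y : x < y -> y < 1 -> Kf c s x = Kf c s y -> exists t, x < t < y /\ Qf c s t = 0.
Proof.
  intros Hxy Hy E. destruct (MVT_cor2 (Kf c s) (fun t => Qf c s t / (1 - t)^3) x y Hxy) as [t [Ht1 Ht2]].
  - intros t Ht. apply K_der. lra.
  - exists t. split; [lra|]. rewrite E in Ht1. replace (Kf c s y - Kf c s y) with 0 in Ht1 by ring.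
    symmetry in Ht1. apply Rmult_integral in Ht1. destruct Ht1 as [H|H]; [|lra].
    assert (Hp : (1 - t)^3 <> 0) by (apply pow_nonzero; lra).
    apply Rmult_integral in H. destruct H as [H|H]; auto. exfalso. apply Rinv_neq_0_compat in Hp. auto.
Qed.

Lemma g_three a b t1 t2 t3 : 1 < INR a -> 1 < INR b -> 0 < t1 -> t1 < t2 -> t2 < t3 -> t3 < 1 ->
  g a b t1 = 0 -> g a b t2 = 0 -> g a b t3 = 0 -> False.
Proof.
  intros Ha Hb H1 H12 H23 H3 G1 G2 G3.
  set (c := (INR a - 1) * (INR b - 1)). set (s := INR a + INR b - 2).
  assert (K1 : Kf c s t1 = 0) by (unfold c, s; rewrite K_g, G1; [ring|lra]).
  assert (K2 : Kf c s t2 = 0) by (unfold c, s; rewrite K_g, G2; [ring|lra]).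
  assert (K3 : Kf c s t3 = 0) by (unfold c, s; rewrite K_g, G3; [ring|lra]).
  destruct (K_root c s 0 t1) as [r1 [R1 Q1]]; try lra. rewrite K0, K1; auto.
  destruct (K_root c s t1 t2) as [r2 [R2 Q2]]; try lra.
  destruct (K_root c s t2 t3) as [r3 [R3 Q3]]; try lra.
  apply (Q_no3 c s r1 r2 r3); try lra. unfold c; nra.
Qed.

Lemma g_nonneg_unique a b t1 t2 : 1 < INR a -> 1 < INR b ->
  (forall z, 0 < z < 1 -> 0 <= g a b z) -> 0 < t1 -> t1 < t2 -> t2 < 1 ->
  g a b t1 = 0 -> g a b t2 = 0 -> False.
Proof.
  intros Ha Hb Hnn H1 H12 H2 G1 G2.
  set (c := (INR a - 1) * (INR b - 1)). set (s := INR a + INR b - 2).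
  assert (K1 : Kf c s t1 = 0) by (unfold c, s; rewrite K_g, G1; [ring|lra]).
  assert (K2 : Kf c s t2 = 0) by (unfold c, s; rewrite K_g, G2; [ring|lra]).
  destruct (K_root c s 0 t1) as [r1 [R1 Q1]]; try lra. rewrite K0, K1; auto.
  destruct (K_root c s t1 t2) as [r2 [R2 Q2]]; try lra.
  assert (Hd := K_der c s t1 ltac:(lra)).
  assert (Hm := deriv_minimum (Kf c s) 0 1 t1 (exist _ _ Hd) ltac:(lra) ltac:(lra)).
  simpl in Hm.
  assert (Q0 : Qf c s t1 = 0).
  { assert (Hp : (1 - t1) * ((1 - t1) * ((1 - t1) * 1)) > 0).
    { assert (0 < 1 - t1) by lra. repeat apply Rmult_lt_0_compat; lra. }
    cut (Qf c s t1 / ((1 - t1) * ((1 - t1) * ((1 - t1) * 1))) = 0).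
    { intro HH. apply Rmult_integral in HH. destruct HH as [HH|HH]; auto.
      exfalso. apply (Rinv_neq_0_compat _ (Rgt_not_eq _ _ Hp)); auto. }
    apply Hm. intros x Hx0 Hx1. rewrite K1. unfold c, s. rewrite K_g by lra.
    apply Rmult_le_pos. apply Hnn; lra. apply Rmult_le_pos; [lra|]. left; apply Rinv_0_lt_compat; lra.
    }
  apply (Q_no3 c s r1 t1 r2); try lra. unfold c; nra.
Qed.

Lemma g_exd a b z : 0 < z < 1 -> ex_derive (g a b) z /\ ex_derive (fun t => - g a b t) z.
Proof. intros Hz. split; unfold g, fz; auto_derive; repeat split; lra. Qed.

Lemma g_cont a b z : 0 < z < 1 -> continuity_pt (g a b) z /\ continuity_pt (fun t => - g a b t) z.
Proof.
  intros Hz. destruct (g_exd a b z Hz) as [H1 H2]. split; apply derivable_continuous_pt; apply ex_derive_Reals_0; auto.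
Qed.

Lemma g_ivt a b x y : 0 < x -> x < y -> y < 1 -> g a b x * g a b y < 0 -> exists t, x < t < y /\ g a b t = 0.
Proof.
  intros Hx Hxy Hy Hs.
  destruct (Rlt_or_le (g a b x) 0) as [Hgx|Hgx].
  - assert (Hgy : 0 < g a b y) by nra.
    destruct (Ranalysis5.IVT_interv (g a b) x y) as [t [Ht Hg]]; auto.
    intros t Ht. apply (g_cont a b t). lra.
    exists t. split; auto. split.
    destruct (Req_dec t x); [subst; lra|lra].
    destruct (Req_dec t y); [subst; lra|lra].
  - assert (Hgy : g a b y < 0) by nra. assert (Hgx' : 0 < g a b x) by nra.
    destruct (Ranalysis5.IVT_interv (fun t => - g a b t) x y) as [t [Ht Hg]]; try lra.
    intros t Ht. apply (g_cont a b t). lra.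
    exists t. split; [|lra]. split.
    destruct (Req_dec t x); [subst; lra|lra].
    destruct (Req_dec t y); [subst; lra|lra].
Qed.

Lemma gw_eq a b z : 0 < z < 1 ->
  g a b z * (1 - z) = (INR a - 1) * (INR b - 1) * fz z * (1 - z) + 1 - ((INR a - 1) + (INR b - 1)) * (1 - z).
Proof. intros Hz. unfold g. field. lra. Qed.

Lemma g_pos_left a b zl z : 3 <= INR a -> INR a < INR b -> 0 < zl < 1 -> fz zl = 1 / (INR a - 1) ->
  0 < z -> z <= zl -> 0 < g a b z.
Proof.
  intros Ha Hab Hzl Hf Hz Hzz.
  assert (HF : fz zl <= fz z). { destruct (Req_dec z zl). subst; lra. left. apply f_dec; lra. }
  assert (Hb := f_bounds z ltac:(lra)).
  assert (E := gw_eq a b z ltac:(lra)).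
  set (al := INR a - 1) in *. set (be := INR b - 1) in *. set (F := fz z) in *. set (w := 1 - z) in *.
  assert (Hal : 2 <= al) by (unfold al; lra). assert (Hbe : al < be) by (unfold al, be; lra).
  assert (HaF : 1 <= al * F). { rewrite Hf in HF. apply Rmult_le_reg_r with (/ al). apply Rinv_0_lt_compat; lra.
    replace (al * F * / al) with F by (field; lra). replace (1 * / al) with (1 / al) by (field; lra). lra. }
  assert (Hw : 0 < w) by (unfold w; lra).
  assert (0 < g a b z * w).
  { rewrite E. destruct (Rlt_or_le 1 (al * w)) as [C|C].
    - assert (al * be * F * w - al * be * w * w > 0).
      { replace (al * be * F * w - al * be * w * w) with (al * be * w * (F - w)) by ring.
        apply Rmult_gt_0_compat; [|lra]. apply Rmult_gt_0_compat; [|lra]. apply Rmult_gt_0_compat; lra. }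
      assert ((al * w - 1) * (be * w - 1) > 0) by (apply Rmult_gt_0_compat; nra). nra.
    - destruct C as [C|C].
      + assert (be * w * (al * F - 1) >= 0) by (apply Rle_ge, Rmult_le_pos; [apply Rmult_le_pos|]; lra). nra.
      + assert (al * F > 1) by nra.
        assert (be * w * (al * F - 1) > 0) by (apply Rmult_gt_0_compat; [apply Rmult_gt_0_compat|]; lra). nra. }
  nra.
Qed.

Lemma g_pos_right a b zr z : 3 <= INR a -> INR a < INR b -> 0 < zr < 1 -> fz zr = 1 / (INR b - 1) ->
  zr <= z -> z < 1 -> 0 < g a b z.
Proof.
  intros Ha Hab Hzr Hf Hz Hzz.
  assert (HF : fz z <= fz zr). { destruct (Req_dec z zr). subst; lra. left. apply f_dec; lra. }
  assert (Hb := f_bounds z ltac:(lra)).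
  assert (E := gw_eq a b z ltac:(lra)).
  set (al := INR a - 1) in *. set (be := INR b - 1) in *. set (F := fz z) in *. set (w := 1 - z) in *.
  assert (Hal : 2 <= al) by (unfold al; lra). assert (Hbe : al < be) by (unfold al, be; lra).
  assert (HbF : be * F <= 1). { rewrite Hf in HF. apply Rmult_le_reg_r with (/ be). apply Rinv_0_lt_compat; lra.
    replace (be * F * / be) with F by (field; lra). replace (1 * / be) with (1 / be) by (field; lra). lra. }
  assert (Hw : 0 < w) by (unfold w; lra).
  assert (0 < g a b z * w).
  { rewrite E.
    assert (al * be * F * w - al * be * w * w > 0).
    { replace (al * be * F * w - al * be * w * w) with (al * be * w * (F - w)) by ring.
      apply Rmult_gt_0_compat; [|lra]. apply Rmult_gt_0_compat; [|lra]. apply Rmult_gt_0_compat; lra. }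
    assert (be * w < 1) by nra. assert (al * w < be * w) by nra.
    assert ((al * w - 1) * (be * w - 1) > 0) by nra. nra. }
  nra.
Qed.

Lemma zab_eq a b : (a < b)%nat -> exists k, INR (S k) = INR b - INR a /\ forall z, zab a b z = / z ^ (S k).
Proof.
  intros Hab. exists (b - a - 1)%nat. set (k := (b - a - 1)%nat).
  assert (Hb : b = (a + S k)%nat) by (unfold k; lia). split.
  - rewrite Hb, plus_INR. ring.
  - intros z. unfold zab. rewrite Hb.
    replace (Z.of_nat a - Z.of_nat (a + S k))%Z with (Z.neg (Pos.of_succ_nat k)).
    + simpl. rewrite SuccNat2Pos.id_succ. reflexivity.
    + rewrite <- Pos2Z.opp_pos. rewrite Zpos_P_of_succ_nat. lia.
Qed.

Lemma hder0 A B z k : 0<z<1 -> (B-1)*fz z - 1 <> 0 -> B <> 0 -> INR (S k) = B - A ->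
 is_derive (fun z => (A*/z^(S k) - B - fz z*(A*(A-1)*/z^(S k) - B*(B-1))) / (B*((B-1)*fz z - 1))) z
  (A * / z^(S k) * (B - A) * fz z * (fz z*(B-1)*(A-1) + 1/(1-z) + 2 - B - A) / (z*B*((B-1)*fz z - 1)^2)).
Proof.
intros Hz Hv HB Hm. assert (Hzk : z^k <> 0) by (apply pow_nonzero; lra).
unfold fz in *. auto_derive.
- replace (1 + - z) with (1 - z) by ring. 
  assert (B * ((B - 1) * (- ln (1 - z) * (1 - z) * / z) + - (1)) <> 0).
  { apply Rmult_integral_contrapositive; split; auto. }
  repeat split; try lra; try (apply Rmult_integral_contrapositive; split; lra).
- match goal with |- context [match k with O => ?x | S _ => ?y end] => change (match k with O => x | S _ => y end) with (INR (S k)) end.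
  rewrite Hm. replace (1 + - z) with (1 - z) by ring. simpl pow.
  set (L := ln (1 - z)) in *. field.
  repeat split; try lra; auto. intro E. apply Hv.
  replace ((B-1)*(-L*(1-z)/z) - 1) with (((B-1)*(-L*(1-z)) - z)/z) by (field; lra). rewrite E. field; lra.
Qed.

Lemma h_der a b k z : INR (S k) = INR b - INR a -> (forall z, zab a b z = / z ^ (S k)) ->
  0 < z < 1 -> (INR b - 1) * fz z - 1 <> 0 -> INR b <> 0 ->
  derivable_pt_lim (h a b) z
   (INR a * / z ^ (S k) * (INR b - INR a) * fz z * g a b z / (z * INR b * ((INR b - 1) * fz z - 1)^2)).
Proof.
  intros Hm Hz0 Hz Hv HB. apply is_derive_Reals.
  eapply is_derive_ext; [|apply (hder0 (INR a) (INR b) z k Hz Hv HB Hm)].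
  intros t. unfold h, hnum, hden. rewrite Hz0. reflexivity.
Qed.

Lemma h_eq a b z : INR b * ((INR b - 1) * fz z - 1) <> 0 ->
  h a b z = 1 + INR a * zab a b z * (1 - (INR a - 1) * fz z) / (INR b * ((INR b - 1) * fz z - 1)).
Proof. intros H. destruct (Rmult_neq_0_reg _ _ H). unfold h, hnum, hden. field. auto. Qed.

Lemma mono_inc (H D : R -> R) x y : x < y -> (forall c, x <= c <= y -> derivable_pt_lim H c (D c)) ->
  (forall c, x < c < y -> 0 < D c) -> H x < H y.
Proof.
  intros Hxy Hd Hp. destruct (MVT_cor2 H D x y Hxy Hd) as [c [E Hc]].
  assert (0 < D c * (y - x)) by (apply Rmult_lt_0_compat; [apply Hp; auto|lra]). lra.
Qed.

Lemma mono_dec (H D : R -> R) x y : x < y -> (forall c, x <= c <= y -> derivable_pt_lim H c (D c)) ->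
  (forall c, x < c < y -> D c < 0) -> H y < H x.
Proof.
  intros Hxy Hd Hp. destruct (MVT_cor2 H D x y Hxy Hd) as [c [E Hc]].
  assert (D c * (y - x) < 0). { assert (D c < 0) by (apply Hp; auto). nra. } lra.
Qed.

Lemma mono_le (H D : R -> R) x y : x < y -> (forall c, x <= c <= y -> derivable_pt_lim H c (D c)) ->
  (forall c, x < c < y -> 0 <= D c) -> H x <= H y.
Proof.
  intros Hxy Hd Hp. destruct (MVT_cor2 H D x y Hxy Hd) as [c [E Hc]].
  assert (0 <= D c * (y - x)) by (apply Rmult_le_pos; [apply Hp; auto|lra]). lra.
Qed.

Lemma mono_inc1 (H D : R -> R) x y : x < y -> (forall c, x <= c <= y -> derivable_pt_lim H c (D c)) ->
  (forall c, x < c < y -> 0 <= D c) -> (exists p, forall c, x < c < y -> c <> p -> 0 < D c) -> H x < H y.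
Proof.
  intros Hxy Hd Hnn [p Hp]. set (m := (x + y) / 2).
  destruct (Rle_or_lt p m) as [C|C].
  - assert (H x <= H m) by (apply (mono_le H D); unfold m in *; intros; try apply Hd; try apply Hnn; lra).
    assert (H m < H y) by (apply (mono_inc H D); unfold m in *; intros; try apply Hd; try apply Hp; lra). lra.
  - assert (H x < H m) by (apply (mono_inc H D); unfold m in *; intros; try apply Hd; try apply Hp; lra).
    assert (H m <= H y) by (apply (mono_le H D); unfold m in *; intros; try apply Hd; try apply Hnn; lra). lra.
Qed.

Lemma quot_nn x y : x < 0 -> 0 < y -> x / y < 0.
Proof. intros. unfold Rdiv. assert (0 < / y) by (apply Rinv_0_lt_compat; auto). nra. Qed.
Lemma quot_pp x y : 0 < x -> 0 < y -> 0 < x / y.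
Proof. intros. unfold Rdiv. assert (0 < / y) by (apply Rinv_0_lt_compat; auto). nra. Qed.
Lemma quot_pn x y : 0 < x -> y < 0 -> x / y < 0.
Proof. intros. unfold Rdiv. assert (/ y < 0) by (apply Rinv_lt_0_compat; auto). nra. Qed.
Lemma lt_quot x y M : 0 < y -> x < M * y -> x / y < M.
Proof. intros. apply Rmult_lt_reg_r with y; auto. replace (x / y * y) with x by (field; lra). lra. Qed.
Lemma quot_lt x y M : 0 < y -> M * y < x -> M < x / y.
Proof. intros. apply Rmult_lt_reg_r with y; auto. replace (x / y * y) with x by (field; lra). lra. Qed.

Theorem lemma3 (a b : nat) (Ha : (3 <= a)%nat) (Hab : (a < b)%nat)
  (zl zr : R)
  (Hzl : 0 < zl < 1 /\ fz zl = 1 / (INR a - 1))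
  (Hzr : 0 < zr < 1 /\ fz zr = 1 / (INR b - 1)) :
  ((forall z, 0 < z < 1 -> (hden a b z = 0 <-> z = zr)) /\ hnum a b zr <> 0) /\
  (forall M, exists d, 0 < d /\ forall z, 0 < z < d -> h a b z < M) /\
  (forall M, exists d, 0 < d /\ forall z, zr - d < z < zr -> M < h a b z) /\
  (forall z, 0 < z <= zl -> h a b z <= 1) /\
  ((forall z, zl < z < zr -> 1 < h a b z) /\ h a b zl = 1) /\
  (forall z, zr < z < 1 -> h a b z < 1) /\
  (forall z, 0 < z < 1 -> z <> zr ->
     exists l, derivable_pt_lim (h a b) z l /\ (0 < l <-> 0 < g a b z)) /\
  (forall x y, 0 < x -> x < y -> y <= zl -> h a b x < h a b y) /\
  (forall x y, zr < x -> x < y -> y < 1 -> h a b x < h a b y) /\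
  ((forall z, 0 < z < 1 -> 0 <= g a b z) ->
     forall x y, zl <= x -> x < y -> y < zr -> h a b x < h a b y) /\
  ((exists z, 0 < z < 1 /\ g a b z < 0) ->
     forall z1 z2 : R,
       (0 < z1 < 1 /\ g a b z1 = 0 /\ forall z, 0 < z < 1 -> g a b z = 0 -> z1 <= z) ->
       (0 < z2 < 1 /\ g a b z2 = 0 /\ forall z, 0 < z < 1 -> g a b z = 0 -> z <= z2) ->
       zl < z1 < z2 /\ z2 < zr /\
       (forall x y, zl <= x -> x < y -> y <= z1 -> h a b x < h a b y) /\
       (forall x y, z1 <= x -> x < y -> y <= z2 -> h a b y < h a b x) /\
       (forall x y, z2 <= x -> x < y -> y < zr -> h a b x < h a b y)).
Proof.
  destruct Hzl as [Hzl Hfl]. destruct Hzr as [Hzr Hfr].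
  assert (HA : 3 <= INR a) by (replace 3 with (INR 3) by (simpl; ring); apply le_INR; lia).
  assert (HAB : INR a + 1 <= INR b) by (rewrite <- S_INR; apply le_INR; lia).
  destruct (zab_eq a b Hab) as [k [Hk Hzab]].
  assert (Hinv : 1 / (INR b - 1) < 1 / (INR a - 1)).
  { unfold Rdiv; rewrite !Rmult_1_l; apply Rinv_lt_contravar; nra. }
  assert (Hlr : zl < zr).
  { destruct (Rlt_or_le zl zr) as [C|C]; auto. destruct (Req_dec zl zr) as [E|E].
    - subst. lra.
    - assert (fz zl < fz zr) by (apply f_dec; lra). lra. }
  assert (Hv_pos : forall z, 0 < z < zr -> 0 < (INR b - 1) * fz z - 1).
  { intros z Hz. assert (fz zr < fz z) by (apply f_dec; lra). rewrite Hfr in H.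
    assert ((INR b - 1) * (1 / (INR b - 1)) < (INR b - 1) * fz z) by (apply Rmult_lt_compat_l; lra).
    replace ((INR b - 1) * (1 / (INR b - 1))) with 1 in H0 by (field; lra). lra. }
  assert (Hv_neg : forall z, zr < z < 1 -> (INR b - 1) * fz z - 1 < 0).
  { intros z Hz. assert (fz z < fz zr) by (apply f_dec; lra). rewrite Hfr in H.
    assert ((INR b - 1) * fz z < (INR b - 1) * (1 / (INR b - 1))) by (apply Rmult_lt_compat_l; lra).
    replace ((INR b - 1) * (1 / (INR b - 1))) with 1 in H0 by (field; lra). lra. }
  assert (Hvr : (INR b - 1) * fz zr - 1 = 0) by (rewrite Hfr; field; lra).
  assert (Hu_neg : forall z, 0 < z < zl -> 1 - (INR a - 1) * fz z < 0).
  { intros z Hz. assert (fz zl < fz z) by (apply f_dec; lra). rewrite Hfl in H.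
    assert ((INR a - 1) * (1 / (INR a - 1)) < (INR a - 1) * fz z) by (apply Rmult_lt_compat_l; lra).
    replace ((INR a - 1) * (1 / (INR a - 1))) with 1 in H0 by (field; lra). lra. }
  assert (Hu_pos : forall z, zl < z < 1 -> 0 < 1 - (INR a - 1) * fz z).
  { intros z Hz. assert (fz z < fz zl) by (apply f_dec; lra). rewrite Hfl in H.
    assert ((INR a - 1) * fz z < (INR a - 1) * (1 / (INR a - 1))) by (apply Rmult_lt_compat_l; lra).
    replace ((INR a - 1) * (1 / (INR a - 1))) with 1 in H0 by (field; lra). lra. }
  assert (Hul : 1 - (INR a - 1) * fz zl = 0) by (rewrite Hfl; field; lra).
  assert (Hp : forall z, 0 < z < 1 -> 1 <= zab a b z /\ / z <= zab a b z).
  { intros z Hz. rewrite Hzab. simpl pow.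
    assert (0 < z ^ k) by (apply pow_lt; lra).
    assert (z ^ k <= 1). { clear -Hz. destruct k as [|k']. simpl; lra. left. apply (pow_lt_1_compat z (S k')); [lra|lia]. }
    assert (/ z <= / (z * z ^ k)) by (apply Rinv_le_contravar; nra).
    assert (1 <= / z). { rewrite <- Rinv_1. apply Rinv_le_contravar; lra. } lra. }
  assert (Hvnz : forall z, 0 < z < 1 -> z <> zr -> (INR b - 1) * fz z - 1 <> 0).
  { intros z Hz Hne. destruct (Rlt_or_le z zr) as [C|C].
    - specialize (Hv_pos z ltac:(lra)). lra.
    - specialize (Hv_neg z ltac:(lra)). lra. }
  assert (Hden : forall z, 0 < z < 1 -> z <> zr -> INR b * ((INR b - 1) * fz z - 1) <> 0).
  { intros z Hz Hne. apply Rmult_integral_contrapositive; split; [lra|]. apply Hvnz; auto. }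
  pose (P := fun z => INR a * / z ^ (S k) * (INR b - INR a) * fz z / (z * INR b * ((INR b - 1) * fz z - 1)^2)).
  assert (Hder : forall z, 0 < z < 1 -> z <> zr -> derivable_pt_lim (h a b) z (P z * g a b z) /\ 0 < P z).
  { intros z Hz Hne. assert (Hv := Hvnz z Hz Hne). assert (Hf := f_bounds z Hz). split.
    - replace (P z * g a b z) with
        (INR a * / z ^ (S k) * (INR b - INR a) * fz z * g a b z / (z * INR b * ((INR b - 1) * fz z - 1)^2))
        by (unfold P; field; repeat split; try lra; try (apply pow_nonzero; lra)).
      apply h_der; auto. lra.
    - unfold P. unfold Rdiv. apply Rmult_lt_0_compat.
      + assert (0 < / z ^ S k) by (apply Rinv_0_lt_compat, pow_lt; lra).
        assert (0 < fz z) by lra.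
        apply Rmult_lt_0_compat; [|lra]. apply Rmult_lt_0_compat; [|lra]. apply Rmult_lt_0_compat; lra.
      + apply Rinv_0_lt_compat. apply Rmult_lt_0_compat; [apply Rmult_lt_0_compat; lra|].
        assert (0 < ((INR b - 1) * fz z - 1)^2) by (apply pow2_gt_0; auto). lra. }

  assert (Hnum : forall z, hnum a b z = INR a * zab a b z * (1 - (INR a - 1) * fz z) + hden a b z)
    by (intro; unfold hnum, hden; ring).
  assert (Hppos : forall z, 0 < z < 1 -> 0 < zab a b z) by (intros z Hz; destruct (Hp z Hz); lra).
  assert (Hhe : forall z, 0 < z < 1 -> z <> zr ->
    h a b z = 1 + INR a * zab a b z * (1 - (INR a - 1) * fz z) / (INR b * ((INR b - 1) * fz z - 1)))
    by (intros z Hz Hne; apply h_eq; apply Hden; auto).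
  assert (Pi : (forall z, 0 < z < 1 -> (hden a b z = 0 <-> z = zr)) /\ hnum a b zr <> 0).
  { split.
    - intros z Hz. unfold hden. split.
      + intro E. destruct (Req_dec z zr) as [|Hne]; auto. exfalso; apply (Hden z Hz Hne); auto.
      + intro; subst; rewrite Hvr; ring.
    - rewrite Hnum. unfold hden. rewrite Hvr. assert (0 < 1 - (INR a - 1) * fz zr) by (apply Hu_pos; lra).
      assert (0 < zab a b zr) by (apply Hppos; lra). assert (0 < INR a * zab a b zr) by (apply Rmult_lt_0_compat; lra).
      nra. }
  assert (Piv : forall z, 0 < z <= zl -> h a b z <= 1).
  { intros z Hz. rewrite Hhe by lra. destruct (Req_dec z zl) as [E|E].
    - subst. rewrite Hul. unfold Rdiv. lra.
    - assert (0 < INR a * zab a b z) by (apply Rmult_lt_0_compat; [lra|apply Hppos; lra]).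
      assert (1 - (INR a - 1) * fz z < 0) by (apply Hu_neg; lra).
      assert (0 < (INR b - 1) * fz z - 1) by (apply Hv_pos; lra).
      assert (INR a * zab a b z * (1 - (INR a - 1) * fz z) / (INR b * ((INR b - 1) * fz z - 1)) < 0).
      { apply quot_nn. nra. apply Rmult_lt_0_compat; lra. } lra. }
  assert (Pv : (forall z, zl < z < zr -> 1 < h a b z) /\ h a b zl = 1).
  { split.
    - intros z Hz. rewrite Hhe by lra.
      assert (0 < INR a * zab a b z) by (apply Rmult_lt_0_compat; [lra|apply Hppos; lra]).
      assert (0 < 1 - (INR a - 1) * fz z) by (apply Hu_pos; lra).
      assert (0 < (INR b - 1) * fz z - 1) by (apply Hv_pos; lra).
      assert (0 < INR a * zab a b z * (1 - (INR a - 1) * fz z) / (INR b * ((INR b - 1) * fz z - 1))).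
      { apply quot_pp. nra. apply Rmult_lt_0_compat; lra. } lra.
    - rewrite Hhe by lra. rewrite Hul. unfold Rdiv. lra. }
  assert (Pvi : forall z, zr < z < 1 -> h a b z < 1).
  { intros z Hz. rewrite Hhe by lra.
    assert (0 < INR a * zab a b z) by (apply Rmult_lt_0_compat; [lra|apply Hppos; lra]).
    assert (0 < 1 - (INR a - 1) * fz z) by (apply Hu_pos; lra).
    assert ((INR b - 1) * fz z - 1 < 0) by (apply Hv_neg; lra).
    assert (INR a * zab a b z * (1 - (INR a - 1) * fz z) / (INR b * ((INR b - 1) * fz z - 1)) < 0).
    { apply quot_pn. nra. nra. } lra. }
  assert (Pvii : forall z, 0 < z < 1 -> z <> zr ->
     exists l, derivable_pt_lim (h a b) z l /\ (0 < l <-> 0 < g a b z)).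
  { intros z Hz Hne. destruct (Hder z Hz Hne) as [Hd HP]. exists (P z * g a b z). split; auto.
    split; intro; [|nra]. destruct (Rlt_or_le 0 (g a b z)); auto. nra. }
  assert (HgA : 3 <= INR a) by lra. assert (HgAB : INR a < INR b) by lra.
  assert (Pviii : forall x y, 0 < x -> x < y -> y <= zl -> h a b x < h a b y).
  { intros x y Hx Hxy Hy. apply (mono_inc (h a b) (fun c => P c * g a b c)); auto.
    - intros c Hc. apply Hder; lra.
    - intros c Hc. destruct (Hder c ltac:(lra) ltac:(lra)) as [_ HP].
      assert (0 < g a b c) by (apply (g_pos_left a b zl c); auto; lra). nra. }
  assert (Pix : forall x y, zr < x -> x < y -> y < 1 -> h a b x < h a b y).
  { intros x y Hx Hxy Hy. apply (mono_inc (h a b) (fun c => P c * g a b c)); auto.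
    - intros c Hc. apply Hder; lra.
    - intros c Hc. destruct (Hder c ltac:(lra) ltac:(lra)) as [_ HP].
      assert (0 < g a b c) by (apply (g_pos_right a b zr c); auto; lra). nra. }
  assert (Px : (forall z, 0 < z < 1 -> 0 <= g a b z) ->
     forall x y, zl <= x -> x < y -> y < zr -> h a b x < h a b y).
  { intros Hnn x y Hx Hxy Hy. apply (mono_inc1 (h a b) (fun c => P c * g a b c)); auto.
    - intros c Hc. apply Hder; lra.
    - intros c Hc. destruct (Hder c ltac:(lra) ltac:(lra)) as [_ HP].
      assert (0 <= g a b c) by (apply Hnn; lra). nra.
    - destruct (classic (exists p0, 0 < p0 < 1 /\ g a b p0 = 0)) as [[p0 [Hp0 Gp0]]|Hno].
      + exists p0. intros c Hc Hcp. destruct (Hder c ltac:(lra) ltac:(lra)) as [_ HP].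
        assert (0 <= g a b c) by (apply Hnn; lra).
        assert (g a b c <> 0).
        { intro Gc. destruct (Rlt_or_le c p0) as [C|C].
          - apply (g_nonneg_unique a b c p0); auto; lra.
          - apply (g_nonneg_unique a b p0 c); auto; lra. }
        assert (0 < g a b c) by lra. nra.
      + exists 0. intros c Hc _. destruct (Hder c ltac:(lra) ltac:(lra)) as [_ HP].
        assert (0 <= g a b c) by (apply Hnn; lra).
        assert (g a b c <> 0) by (intro Gc; apply Hno; exists c; split; auto; lra).
        assert (0 < g a b c) by lra. nra. }
  assert (Pxi : (exists z, 0 < z < 1 /\ g a b z < 0) ->
     forall z1 z2 : R,
       (0 < z1 < 1 /\ g a b z1 = 0 /\ forall z, 0 < z < 1 -> g a b z = 0 -> z1 <= z) ->
       (0 < z2 < 1 /\ g a b z2 = 0 /\ forall z, 0 < z < 1 -> g a b z = 0 -> z <= z2) ->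
       zl < z1 < z2 /\ z2 < zr /\
       (forall x y, zl <= x -> x < y -> y <= z1 -> h a b x < h a b y) /\
       (forall x y, z1 <= x -> x < y -> y <= z2 -> h a b y < h a b x) /\
       (forall x y, z2 <= x -> x < y -> y < zr -> h a b x < h a b y)).
  { intros [zs [Hzs Gs]] z1 z2 [Hz1 [G1 M1]] [Hz2 [G2 M2]].
    assert (Ha1 : 1 < INR a) by lra. assert (Hb1 : 1 < INR b) by lra.
    assert (Hzs1 : zl < zs).
    { destruct (Rlt_or_le zl zs) as [C|C]; auto. assert (0 < g a b zs) by (apply (g_pos_left a b zl zs); auto; lra). lra. }
    assert (Hzs2 : zs < zr).
    { destruct (Rlt_or_le zs zr) as [C|C]; auto. assert (0 < g a b zs) by (apply (g_pos_right a b zr zs); auto; lra). lra. }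
    assert (Gl : 0 < g a b zl) by (apply (g_pos_left a b zl zl); auto; lra).
    assert (Gr : 0 < g a b zr) by (apply (g_pos_right a b zr zr); auto; lra).
    destruct (g_ivt a b zl zs) as [t1 [Ht1 Gt1]]; try lra. nra.
    destruct (g_ivt a b zs zr) as [t2 [Ht2 Gt2]]; try lra. nra.
    assert (z1 <= t1) by (apply M1; auto; lra). assert (t2 <= z2) by (apply M2; auto; lra).
    assert (Hz1l : zl < z1).
    { destruct (Rlt_or_le zl z1) as [C|C]; auto. assert (0 < g a b z1) by (apply (g_pos_left a b zl z1); auto; lra). lra. }
    assert (Hz2r : z2 < zr).
    { destruct (Rlt_or_le z2 zr) as [C|C]; auto. assert (0 < g a b z2) by (apply (g_pos_right a b zr z2); auto; lra). lra. }
    assert (Gp1 : forall c, zl < c < z1 -> 0 < g a b c).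
    { intros c Hc. destruct (Rlt_or_le 0 (g a b c)) as [C|C]; auto. exfalso.
      destruct (Req_dec (g a b c) 0) as [E|E].
      - assert (z1 <= c) by (apply M1; auto; lra). lra.
      - destruct (g_ivt a b zl c) as [t [Ht Gt]]; try lra. nra.
        assert (z1 <= t) by (apply M1; auto; lra). lra. }
    assert (Gp2 : forall c, z2 < c < zr -> 0 < g a b c).
    { intros c Hc. destruct (Rlt_or_le 0 (g a b c)) as [C|C]; auto. exfalso.
      destruct (Req_dec (g a b c) 0) as [E|E].
      - assert (c <= z2) by (apply M2; auto; lra). lra.
      - destruct (g_ivt a b c zr) as [t [Ht Gt]]; try lra. nra.
        assert (t <= z2) by (apply M2; auto; lra). lra. }
    assert (Gn : forall c, z1 < c < z2 -> g a b c < 0).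
    { intros c Hc. destruct (Rlt_or_le (g a b c) 0) as [C|C]; auto. exfalso.
      destruct (Req_dec (g a b c) 0) as [E|E].
      - apply (g_three a b z1 c z2); auto; lra.
      - destruct (Rlt_or_le c zs) as [D|D].
        + destruct (g_ivt a b c zs) as [t [Ht Gt]]; try lra. nra.
          apply (g_three a b z1 t z2); auto; lra.
        + destruct D as [D|D]; [|subst; lra].
          destruct (g_ivt a b zs c) as [t [Ht Gt]]; try lra. nra.
          apply (g_three a b z1 t z2); auto; lra. }
    split; [lra|]. split; [lra|]. split; [|split].
    - intros x y Hx Hxy Hy. apply (mono_inc (h a b) (fun c => P c * g a b c)); auto.
      + intros c Hc. apply Hder; lra.
      + intros c Hc. destruct (Hder c ltac:(lra) ltac:(lra)) as [_ HP].
        assert (0 < g a b c) by (apply Gp1; lra). nra.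
    - intros x y Hx Hxy Hy. apply (mono_dec (h a b) (fun c => P c * g a b c)); auto.
      + intros c Hc. apply Hder; lra.
      + intros c Hc. destruct (Hder c ltac:(lra) ltac:(lra)) as [_ HP].
        assert (g a b c < 0) by (apply Gn; lra). nra.
    - intros x y Hx Hxy Hy. apply (mono_inc (h a b) (fun c => P c * g a b c)); auto.
      + intros c Hc. apply Hder; lra.
      + intros c Hc. destruct (Hder c ltac:(lra) ltac:(lra)) as [_ HP].
        assert (0 < g a b c) by (apply Gp2; lra). nra. }
  assert (Pii : forall M, exists d, 0 < d /\ forall z, 0 < z < d -> h a b z < M).
  { intros M. assert (HM0 : 0 <= Rabs M) by apply Rabs_pos. assert (HM1 : M <= Rabs M) by apply RRle_abs.
    assert (HM2 : - M <= Rabs M) by (rewrite <- Rabs_Ropp; apply RRle_abs).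
    assert (HAA : 0 < INR a * (INR a - 2)) by nra. assert (HBB : 0 < INR b * (INR b - 2)) by nra.
    pose (N := 2 * (Rabs M + 1) * INR b * (INR b - 2) / (INR a * (INR a - 2)) + 1).
    assert (HN : 0 < N).
    { unfold N. assert (0 < 2 * (Rabs M + 1) * INR b * (INR b - 2) / (INR a * (INR a - 2))).
      { apply quot_pp; auto. nra. } lra. }
    assert (HNid : INR a * N * (INR a - 2) / 2 = (Rabs M + 1) * INR b * (INR b - 2) + INR a * (INR a - 2) / 2)
      by (unfold N; field; lra).
    assert (Hd1 : 0 < (INR a - 2) / (2 * (INR a - 1))) by (apply quot_pp; lra).
    assert (Hd2 : 0 < 1 / N) by (apply quot_pp; lra).
    exists (Rmin zr (Rmin ((INR a - 2) / (2 * (INR a - 1))) (1 / N))). split.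
    { apply Rmin_glb_lt; [lra|]. apply Rmin_glb_lt; lra. }
    intros z Hz.
    assert (Hz1 : z < zr) by (pose proof (Rmin_l zr (Rmin ((INR a - 2) / (2 * (INR a - 1))) (1 / N))); lra).
    assert (Hz2 : z < (INR a - 2) / (2 * (INR a - 1))) by
      (pose proof (Rmin_r zr (Rmin ((INR a - 2) / (2 * (INR a - 1))) (1 / N)));
       pose proof (Rmin_l ((INR a - 2) / (2 * (INR a - 1))) (1 / N)); lra).
    assert (Hz3 : z < 1 / N) by
      (pose proof (Rmin_r zr (Rmin ((INR a - 2) / (2 * (INR a - 1))) (1 / N)));
       pose proof (Rmin_r ((INR a - 2) / (2 * (INR a - 1))) (1 / N)); lra).
    assert (Hz01 : 0 < z < 1) by lra.
    rewrite Hhe by lra.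
    assert (Hf := f_bounds z Hz01).
    assert (Hv1 : 0 < (INR b - 1) * fz z - 1) by (apply Hv_pos; lra).
    assert (Hv2 : (INR b - 1) * fz z - 1 < INR b - 2) by nra.
    assert (Hza : (INR a - 1) * z < (INR a - 2) / 2).
    { apply Rmult_lt_compat_l with (r := INR a - 1) in Hz2; [|lra].
      replace ((INR a - 1) * ((INR a - 2) / (2 * (INR a - 1)))) with ((INR a - 2) / 2) in Hz2 by (field; lra). lra. }
    assert (Hu : 1 - (INR a - 1) * fz z < (2 - INR a) / 2) by nra.
    assert (HzN : N < / z).
    { apply Rmult_lt_compat_l with (r := N) in Hz3; [|lra].
      replace (N * (1 / N)) with 1 in Hz3 by (field; lra).
      apply Rmult_lt_reg_r with z; [lra|]. replace (/ z * z) with 1 by (field; lra). lra. }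
    destruct (Hp z Hz01) as [Hp1 Hp2].
    set (p := zab a b z) in *. set (u := 1 - (INR a - 1) * fz z) in *. set (v := (INR b - 1) * fz z - 1) in *.
    assert (HpN : N < p) by lra.
    assert (E1 : INR a * p * u < INR a * p * ((2 - INR a) / 2)).
    { apply Rmult_lt_compat_l; [nra|lra]. }
    assert (E2 : INR a * p * ((2 - INR a) / 2) < INR a * N * ((2 - INR a) / 2)).
    { assert (0 < INR a * (INR a - 2) / 2) by nra. nra. }
    assert (E3 : INR a * N * ((2 - INR a) / 2) < - ((Rabs M + 1) * INR b * (INR b - 2))).
    { replace (INR a * N * ((2 - INR a) / 2)) with (- (INR a * N * (INR a - 2) / 2)) by field.
      rewrite HNid. nra. }
    assert (E4 : - ((Rabs M + 1) * INR b * (INR b - 2)) <= (M - 1) * (INR b * v)).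
    { destruct (Rle_or_lt 0 (M - 1)) as [C|C].
      - assert (0 <= (M - 1) * (INR b * v)) by (apply Rmult_le_pos; [lra| apply Rmult_le_pos; lra]).
        assert (0 <= (Rabs M + 1) * (INR b * (INR b - 2))) by (apply Rmult_le_pos; lra). nra.
      - assert (- (Rabs M + 1) <= M - 1) by lra.
        assert (0 < INR b * v) by nra.
        assert (INR b * v < INR b * (INR b - 2)) by nra.
        assert (- (Rabs M + 1) * (INR b * v) <= (M - 1) * (INR b * v)) by (apply Rmult_le_compat_r; lra).
        assert ((Rabs M + 1) * (INR b * v) <= (Rabs M + 1) * (INR b * (INR b - 2))) by (apply Rmult_le_compat_l; lra).
        nra. }
    assert (INR a * p * u / (INR b * v) < M - 1) by (apply lt_quot; [nra|lra]). lra. }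
  assert (Piii : forall M, exists d, 0 < d /\ forall z, zr - d < z < zr -> M < h a b z).
  { intros M. assert (HM0 : 0 <= Rabs M) by apply Rabs_pos. assert (HM1 : M <= Rabs M) by apply RRle_abs.
    assert (HM2 : - M <= Rabs M) by (rewrite <- Rabs_Ropp; apply RRle_abs).
    set (m0 := (zl + zr) / 2).
    assert (Hu0 : 0 < 1 - (INR a - 1) * fz m0) by (apply Hu_pos; unfold m0; lra).
    set (u0 := 1 - (INR a - 1) * fz m0) in *.
    set (eps := INR a * u0 / ((Rabs M + 1) * INR b * (INR b - 1))).
    assert (Heps : 0 < eps) by (apply quot_pp; [nra|]; apply Rmult_lt_0_compat; [|lra]; apply Rmult_lt_0_compat; lra).
    assert (Heid : (Rabs M + 1) * INR b * (INR b - 1) * eps = INR a * u0) by (unfold eps; field; lra).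
    assert (Hc := f_cont zr Hzr).
    unfold continuity_pt, continue_in, limit1_in, limit_in in Hc. simpl in Hc. unfold D_x, no_cond in Hc.
    destruct (Hc eps Heps) as [alp [Halp Hc2]].
    exists (Rmin alp (zr - m0)). split.
    { apply Rmin_glb_lt; unfold m0; lra. }
    intros z Hz.
    assert (Hz1 : zr - alp < z) by (pose proof (Rmin_l alp (zr - m0)); lra).
    assert (Hz2 : m0 < z) by (pose proof (Rmin_r alp (zr - m0)); lra).
    assert (Hm0 : zl < m0) by (unfold m0; lra).
    assert (Hz01 : 0 < z < 1) by lra.
    assert (Hfe : fz z - fz zr < eps).
    { assert (Rdist (fz z) (fz zr) < eps). apply Hc2. split; [split; auto; lra|].
      unfold Rdist. apply Rabs_def1; lra.
      unfold Rdist in H. apply Rabs_def2 in H. lra. }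
    rewrite Hhe by lra.
    assert (Hfm : fz z < fz m0) by (apply f_dec; lra).
    assert (Hv1 : 0 < (INR b - 1) * fz z - 1) by (apply Hv_pos; lra).
    assert (Hv2 : (INR b - 1) * fz z - 1 = (INR b - 1) * (fz z - fz zr)) by (rewrite Hfr; field; lra).
    destruct (Hp z Hz01) as [Hp1 Hp2].
    assert (Hu : u0 <= 1 - (INR a - 1) * fz z) by (unfold u0; nra).
    set (p := zab a b z) in *. set (u := 1 - (INR a - 1) * fz z) in *. set (v := (INR b - 1) * fz z - 1) in *.
    assert (Hv3 : v < (INR b - 1) * eps) by (rewrite Hv2; nra).
    assert (E1 : INR a * u0 <= INR a * p * u).
    { assert (u0 <= p * u) by nra. nra. }
    assert (E2 : (M - 1) * (INR b * v) < INR a * u0).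
    { destruct (Rle_or_lt (M - 1) 0) as [C|C].
      - assert ((M - 1) * (INR b * v) <= 0) by (apply Rmult_le_0_r; nra). nra.
      - assert (INR b * v < INR b * ((INR b - 1) * eps)) by nra.
        assert (0 < INR b * v) by nra.
        assert ((M - 1) * (INR b * v) <= (Rabs M + 1) * (INR b * v)) by (apply Rmult_le_compat_r; lra).
        assert ((Rabs M + 1) * (INR b * v) < (Rabs M + 1) * (INR b * ((INR b - 1) * eps))) by (apply Rmult_lt_compat_l; lra).
        replace ((Rabs M + 1) * (INR b * ((INR b - 1) * eps))) with ((Rabs M + 1) * INR b * (INR b - 1) * eps) in H1 by ring.
        lra. }
    assert (M - 1 < INR a * p * u / (INR b * v)) by (apply quot_lt; [nra|lra]). lra. }
  exact (conj Pi (conj Pii (conj Piii (conj Piv (conj Pv (conj Pvi (conj Pvii (conj Pviii (conj Pix (conj Px Pxi)))))))))).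
Qed.
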